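(* Let $f:[0,1]\to\mathbb{R}$ with $f(0),f(1)\in\mathbb{Z}$ and let $n\in\mathbb{N}_+$. If $n\ge 3$, let also $\psi_n:[0,1]\to\mathbb{R}$ satisfy \[ \psi_n\left(\frac{k+1}{n}\right)-\psi_n\left(\frac{k}{n}\right)\ge \binom{n}{k}^{-1},\quad k=1,\dots,n-2. \] If $f$ is monotone decreasing on $[0,1/n]$ and on $[1-1/n,1]$, and (when $n\ge3$) $f(x)+\psi_n(x)$ is monotone decreasing on $[1/n,1-1/n]$, then $\widetilde{B}_n(f)$ is monotone decreasing on $[0,1]$.
   Context: For $n\in\mathbb{N}_+$ and $f:[0,1]\to\mathbb{R}$, $\widetilde{B}_n(f)(x):=\sum_{k=0}^n \left[f\left(\frac{k}{n}\right)\binom{n}{k}\right]x^k(1-x)^{n-k}$, where $[\alpha]$ is the largest integer $\le\alpha$. Monotone decreasing is meant in the non-strict sense. *)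

(* Defs.v *)
From HB Require Import structures.
From mathcomp Require Import all_boot all_order all_algebra.
From mathcomp Require Import reals.
Set Implicit Arguments. Unset Strict Implicit. Unset Printing Implicit Defensive.
Import Order.TTheory GRing.Theory Num.Theory.
Local Open Scope ring_scope.

Definition Btilde (R : realType) (n : nat) (f : R -> R) (x : R) : R :=
  \sum_(k < n.+1)
     (Num.floor (f (k%:R / n%:R) * ('C(n, k))%:R))%:~R
       * x ^+ k * (1 - x) ^+ (n - k).

Definition decreasing_on (R : realType) (f : R -> R) (a b : R) : Prop :=
  forall x y, a <= x -> x <= y -> y <= b -> f y <= f x.

(* Main.v *)
Require Import Defs.
From HB Require Import structures.
From mathcomp Require Import all_boot all_order all_algebra.
From mathcomp Require Import reals.
From mathcomp Require Import ring lra zify.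
Set Implicit Arguments. Unset Strict Implicit. Unset Printing Implicit Defensive.
Import Order.TTheory GRing.Theory Num.Theory.
Local Open Scope ring_scope.

Definition Bern (R : realType) (n : nat) (c : nat -> R) (x : R) : R :=
  \sum_(k < n.+1) c k * ('C(n, k))%:R * x ^+ k * (1 - x) ^+ (n - k).
Lemma Bern_rec (R : realType) n (c : nat -> R) x :
  Bern n.+1 c x = (1 - x) * Bern n c x + x * Bern n (fun k => c k.+1) x.
Proof.
pose T k := c k * ('C(n, k))%:R * x ^+ k * (1 - x) ^+ (n.+1 - k).
pose U k := c k.+1 * ('C(n, k))%:R * x ^+ k.+1 * (1 - x) ^+ (n - k).
have -> : (1 - x) * Bern n c x = \sum_(k < n.+1) T k.
  rewrite /Bern mulr_sumr; apply: eq_bigr => i _.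
  rewrite /T subSn; last by rewrite -ltnS.
  rewrite exprS; ring.
have -> : x * Bern n (fun k => c k.+1) x = \sum_(k < n.+1) U k.
  rewrite /Bern mulr_sumr; apply: eq_bigr => i _.
  rewrite /U exprS; ring.
have -> : \sum_(k < n.+1) T k = \sum_(k < n.+2) T k.
  by rewrite [RHS]big_ord_recr /= /T bin_small // mulr0 mul0r mul0r addr0.
rewrite /Bern big_ord_recl [in RHS]big_ord_recl.
under eq_bigr => i _ do rewrite /bump /= ?add1n binS natrD subSS.
under eq_bigr => i _ do rewrite mulrDr mulrDl mulrDl.
rewrite big_split /=.
rewrite /T /U /bump /=.
rewrite !bin0 !subn0 -addrA; congr (_ + (_ + _)).
Qed.

Lemma Bern_le (R : realType) n (c d : nat -> R) x :
  0 <= x <= 1 -> (forall k, (k <= n)%N -> d k <= c k) -> Bern n d x <= Bern n c x.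
Proof.
move=> /andP[x0 x1] H; rewrite /Bern; apply: ler_sum => i _.
have hi : (i <= n)%N by rewrite -ltnS.
have hx : 0 <= x ^+ i by rewrite exprn_ge0.
have hy : 0 <= (1 - x) ^+ (n - i) by rewrite exprn_ge0 // subr_ge0.
apply: ler_wpM2r => //; apply: ler_wpM2r => //; apply: ler_wpM2r => //.
exact: H.
Qed.

Lemma Bern_mono (R : realType) n : forall (c : nat -> R),
  (forall k, (k < n)%N -> c k.+1 <= c k) ->
  forall x y, 0 <= x -> x <= y -> y <= 1 -> Bern n c y <= Bern n c x.
Proof.
elim: n => [|n IH] c Hc x y x0 xy y1.
  by rewrite /Bern !big_ord1 /= !expr0 !mulr1.
have x1 : x <= 1 by apply: le_trans y1.
have y0 : 0 <= y by apply: le_trans xy.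
rewrite !Bern_rec.
set P := Bern n c; set Q := Bern n (fun k => c k.+1).
have HP : P y <= P x by apply: IH => // k hk; apply: Hc; apply: ltnW.
have HQ : Q y <= Q x by apply: IH => // k hk; apply: Hc.
have HQP : Q x <= P x.
  apply: Bern_le => //; by rewrite x0 x1.
have H1 : (1 - y) * P y + y * Q y <= (1 - y) * P x + y * Q x.
  by apply: lerD; apply: ler_wpM2l => //; rewrite subr_ge0.
apply: (le_trans H1).
have : 0 <= (y - x) * (P x - Q x) by apply: mulr_ge0; rewrite subr_ge0.
lra.
Qed.

Lemma fl1 (R : realType) (v : R) (C : nat) : (0 < C)%N ->
  (Num.floor (v * C%:R))%:~R / C%:R <= v.
Proof.
move=> hC; have hC' : 0 < C%:R :> R by rewrite ltr0n.
by rewrite ler_pdivrMr // floor_le.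
Qed.

Lemma fl2 (R : realType) (v : R) (C : nat) : (0 < C)%N ->
  v - C%:R^-1 < (Num.floor (v * C%:R))%:~R / C%:R.
Proof.
move=> hC; have hC' : 0 < C%:R :> R by rewrite ltr0n.
rewrite ltr_pdivlMr // mulrBl mulVf ?gt_eqF //.
have := floorD1_gt (v * C%:R); rewrite intrD; lra.
Qed.

Lemma fl3 (R : realType) (v : R) (C : nat) (z : int) : (0 < C)%N ->
  z%:~R <= v -> z%:~R <= (Num.floor (v * C%:R))%:~R / C%:R :> R.
Proof.
move=> hC hz; have hC' : 0 < C%:R :> R by rewrite ltr0n.
rewrite ler_pdivlMr //.
have -> : z%:~R * C%:R = (z * C%:Z)%:~R :> R by rewrite intrM.
rewrite ler_int floor_ge_int intrM /=.
by apply: ler_wpM2r => //; apply: ltW.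
Qed.

Theorem proposition2p6 (R : realType) (f psi : R -> R) (n : nat) :
  (0 < n)%N ->
  (exists z : int, f 0 = z%:~R) ->
  (exists z : int, f 1 = z%:~R) ->
  decreasing_on f 0 (n%:R^-1) ->
  decreasing_on f (1 - n%:R^-1) 1 ->
  ((3 <= n)%N ->
     (forall k : nat, (1 <= k)%N -> (k <= n - 2)%N ->
        psi (k.+1%:R / n%:R) - psi (k%:R / n%:R) >= (('C(n, k))%:R)^-1) /\
     decreasing_on (fun x => f x + psi x) (n%:R^-1) (1 - n%:R^-1)) ->
  decreasing_on (Btilde n f) 0 1.
Proof.
move=> n0 [z0 hz0] [z1 hz1] dec0 dec1 Hmid.
pose c k := (Num.floor (f (k%:R / n%:R) * ('C(n, k))%:R))%:~R / ('C(n, k))%:R : R.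
have hn : 0 < n%:R :> R by rewrite ltr0n.
have Cpos k : (k <= n)%N -> (0 < 'C(n, k))%N by move=> hk; rewrite bin_gt0.
have eqB x : Btilde n f x = Bern n c x.
  rewrite /Btilde /Bern; apply: eq_bigr => i _.
  have hi : (i <= n)%N by rewrite -ltnS.
  rewrite /c mulfVK // pnatr_eq0 -lt0n; exact: Cpos.
have c0 : c 0%N = f 0 by rewrite /c bin0 mul0r !mulr1 divr1 hz0 intrKfloor.
have cn : c n = f 1 by rewrite /c binn divff ?gt_eqF // !mulr1 divr1 hz1 intrKfloor.
have cle k : (k <= n)%N -> c k <= f (k%:R / n%:R) by move=> hk; apply: fl1; apply: Cpos.
have in01 k : (k <= n)%N -> (0 <= (k%:R / n%:R : R)) && ((k%:R / n%:R : R) <= 1).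
  move=> hk; apply/andP; split; first by rewrite divr_ge0 // ltW.
  by rewrite ler_pdivrMr // mul1r ler_nat.
have mono : forall k, (k < n)%N -> c k.+1 <= c k.
  move=> k hk.
  have [->|k0] := eqVneq k 0%N.
    rewrite c0; apply: (le_trans (cle 1%N n0)).
    apply: dec0 => //; rewrite mul1r // invr_ge0 ltW //.
  have [hkn|hkn] := eqVneq k.+1 n.
    rewrite hkn cn hz1 /c.
    apply: fl3; first by apply: Cpos; apply: ltnW.
    rewrite -hz1; apply: dec1 => //.
      have -> : k%:R = n%:R - 1 :> R by rewrite -hkn -addn1 natrD addrK.
      by rewrite mulrBl divff ?gt_eqF // mul1r.
    by have := in01 k (ltnW hk) => /andP[].
  have n3 : (3 <= n)%N.
    by move: k0 hkn hk; clear; move=> /eqP k0 /eqP hkn hk; lia.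
  have [Hpsi Hdec] := Hmid n3.
  have k1 : (1 <= k)%N by rewrite lt0n.
  have k2 : (k <= n - 2)%N.
    by move: hk hkn; clear; move=> hk /eqP hkn; lia.
  have hCk : (0 < 'C(n, k))%N by apply: Cpos; apply: ltnW.
  have h1 := cle k.+1 hk.
  have h2 := fl2 (f (k%:R / n%:R)) hCk.
  have h3 := Hpsi k k1 k2.
  have h4 : f (k.+1%:R / n%:R) + psi (k.+1%:R / n%:R) <= f (k%:R / n%:R) + psi (k%:R / n%:R).
    apply: Hdec.
    - by rewrite ler_pdivlMr // mulVf ?gt_eqF // ler1n.
    - by rewrite ler_pM2r ?invr_gt0 // ler_nat.
    - rewrite ler_pdivrMr // mulrBl mul1r mulVf ?gt_eqF //.
      have : (k.+2 <= n)%N by move: k2 n3; clear; lia.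
      rewrite -(ler_nat R) mulrSr; lra.
  apply: (le_trans h1); apply: ltW; apply: le_lt_trans h2; lra.
move=> x y x0 xy y1; rewrite !eqB; exact: Bern_mono.
Qed.
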